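(* Let $\mathcal{B}$ be a complete topological ring and let $\mathrm{e}=\sum_{i\in\mathbb{N}}\mathrm{e}_iT^i\colon\mathcal{B}\to\mathcal{B}\{T\}$ be a restricted exponential homomorphism. Then: (a) $\mathcal{B}^{\mathrm{e}}$ is a complete topological subring of $\mathcal{B}$. (b) For every $i\ge1$, $\mathrm{e}_i\colon\mathcal{B}\to\mathcal{B}$ is a homomorphism of topological $\mathcal{B}^{\mathrm{e}}$-modules. (c) If $\mathcal{B}$ admits a fundamental system $(\mathfrak{b}_n)_{n\in\mathbb{N}}$ of open ideals consisting of prime ideals of $\mathcal{B}$, then $\mathcal{B}^{\mathrm{e}}$ is factorially closed in $\mathcal{B}$; in particular every invertible element of $\mathcal{B}$ is contained in $\mathcal{B}^{\mathrm{e}}$.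
   Context: Conventions: topological rings are linearly topologized with a countable fundamental system of open ideals; homomorphisms are continuous; complete means the canonical map to $\varprojlim_{\mathfrak{a}}\mathcal{B}/\mathfrak{a}$ (open ideals, discrete quotients) is a topological isomorphism. $\mathcal{B}\{T\}$, $\mathcal{B}\{T,T'\}$ denote restricted power series over $\mathcal{B}$ (coefficients converging to $0$), topologized by the ideals of series with all coefficients in a given open ideal. A restricted exponential homomorphism is a continuous ring homomorphism $\mathrm{e}\colon\mathcal{B}\to\mathcal{B}\{T\}$, $\mathrm{e}(b)=\sum_i\mathrm{e}_i(b)T^i$, with $\mathrm{e}_0=\mathrm{id}_{\mathcal{B}}$ and $\sum_{i,j}\mathrm{e}_j(\mathrm{e}_i(b))T'^jT^i=\sum_\ell\mathrm{e}_\ell(b)(T+T')^\ell$ for all $b$. Its ring of invariants is $\mathcal{B}^{\mathrm{e}}=\{b\in\mathcal{B}:\mathrm{e}(b)=b\}$ (i.e. $b$ equals its image as a constant series), with the induced topology. A subring $R\subseteq\mathcal{B}$ is factorially closed if $b,b'\in\mathcal{B}$ and $bb'\in R\setminus\{0\}$ imply $b,b'\in R$. *)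

(* Defs.v *)
From mathcomp Require Import all_boot all_algebra.
Set Implicit Arguments. Unset Strict Implicit. Unset Printing Implicit Defensive.
Import GRing.Theory.
Local Open Scope ring_scope.

Section LinTop.
Variable B : comPzRingType.

Definition is_ideal (I : B -> Prop) : Prop :=
  I 0 /\ (forall x y, I x -> I y -> I (x + y)) /\ (forall r x, I x -> I (r * x)).

Definition is_prime_ideal (I : B -> Prop) : Prop :=
  is_ideal I /\ ~ I 1 /\ (forall x y, I (x * y) -> I x \/ I y).

Definition is_subring (S : B -> Prop) : Prop :=
  S 0 /\ S 1 /\ (forall x y, S x -> S y -> S (x - y)) /\
  (forall x y, S x -> S y -> S (x * y)).

(* A linear topology on B given by a countable (decreasing) fundamental
   system of open ideals a 0 ⊇ a 1 ⊇ ... *)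
Definition linear_topology (a : nat -> B -> Prop) : Prop :=
  (forall n, is_ideal (a n)) /\ (forall n x, a n.+1 x -> a n x).

(* The subset S (with induced topology, fundamental system a n ∩ S) is
   complete: the canonical map S -> lim_n S/(a n ∩ S) is bijective, i.e.
   separated, and every compatible family (x n), x (n+1) ≡ x n mod a n,
   has a limit b ∈ S with b ≡ x n mod a n for all n. *)
Definition complete_in (a : nat -> B -> Prop) (S : B -> Prop) : Prop :=
  (forall b, S b -> (forall n, a n b) -> b = 0) /\
  (forall x : nat -> B, (forall n, S (x n)) -> (forall n, a n (x n.+1 - x n)) ->
     exists b, S b /\ forall n, a n (b - x n)).

Definition complete (a : nat -> B -> Prop) : Prop := complete_in a (fun _ => True).

(* e = sum_i e_i T^i : B -> B{T} is a restricted exponential homomorphism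
   (everything written coefficientwise). *)
Definition is_restricted_exp_hom (a : nat -> B -> Prop) (e : nat -> B -> B) : Prop :=
  (forall b, e 0%N b = b) /\
  (* e is a ring homomorphism B -> B{T} (product = Cauchy product) *)
  (forall i b b', e i (b + b') = e i b + e i b') /\
  (forall i, e i 1 = (i == 0%N)%:R) /\
  (forall i b b', e i (b * b') = \sum_(j < i.+1) e j b * e (i - j)%N b') /\
  (* e(b) is a restricted power series: coefficients tend to 0 *)
  (forall b n, exists N, forall i, (N <= i)%N -> a n (e i b)) /\
  (* continuity for the topology of B{T} *)
  (forall n, exists m, forall b, a m b -> forall i, a n (e i b)) /\
  (* exponential law: coefficient of T'^j T^i *)
  (forall i j b, e j (e i b) = ('C(i + j, i))%:R * e (i + j)%N b).

(* Ring of invariants B^e = {b | e(b) = b} *)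
Definition invariants (e : nat -> B -> B) (b : B) : Prop :=
  forall i, (0 < i)%N -> e i b = 0.

Definition factorially_closed (R : B -> Prop) : Prop :=
  forall b b', R (b * b') -> b * b' <> 0 -> R b /\ R b'.

End LinTop.

(* Main.v *)
Require Import Defs.
From mathcomp Require Import all_boot all_algebra.
From mathcomp Require Import zify.
From Stdlib Require Import Classical.
Local Open Scope ring_scope.
Import GRing.Theory.

Lemma max_ex (Q : nat -> Prop) N : (forall j, (N <= j)%N -> ~ Q j) ->
  forall n i, (N - i <= n)%N -> Q i ->
  exists d, (i <= d)%N /\ Q d /\ forall j, (d < j)%N -> ~ Q j.
Proof.
move=> HN; elim=> [|n IH] i Hi Qi.
  by exfalso; apply: (HN i) => //; lia.
destruct (classic (exists j, (i < j)%N /\ Q j)) as [[j [ij Qj]]|no].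
  have Hj : (N - j <= n)%N.
    case: (leqP N j) => hj; first by exfalso; exact: (HN j hj Qj).
    lia.
  have [d [jd [Qd Hd]]] := IH j Hj Qj.
  exists d; split; [lia|split=>//].
exists i; split=> //; split=> // j ij Qj; apply: no; by exists j.
Qed.

Section S.
Variable B : comPzRingType.
Variable a : nat -> B -> Prop.
Variable e : nat -> B -> B.
Hypothesis He : is_restricted_exp_hom a e.

Lemma e0 i : e i 0 = 0.
Proof.
case: He => _ [Hadd _].
apply: (@addrI _ (e i 0)); by rewrite addr0 -Hadd addr0.
Qed.

Lemma eN i x : e i (- x) = - e i x.
Proof.
case: He => _ [Hadd _].
apply/eqP; rewrite -subr_eq0 opprK -Hadd addNr; by rewrite e0.
Qed.

Lemma eB i x y : e i (x - y) = e i x - e i y.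
Proof. case: He => _ [Hadd _]. by rewrite Hadd eN. Qed.

Lemma emul_inv i r b : invariants e r -> e i (r * b) = r * e i b.
Proof.
move=> Hr; case: He => H0 [_ [_ [Hmul _]]].
rewrite Hmul big_ord_recl /= H0 subn0 big1 ?addr0 // => j _.
by rewrite Hr // mul0r.
Qed.

Lemma prime_key (P : B -> Prop) b b' N :
  is_prime_ideal P -> (forall i, (N <= i)%N -> P (e i b)) ->
  (forall i, (N <= i)%N -> P (e i b')) -> ~ P (b * b') ->
  (forall i, (0 < i)%N -> e i (b * b') = 0) -> forall i, (0 < i)%N -> P (e i b).
Proof.
move=> [[P0 [PD PM]] [P1 Pp]] Hb Hb' Pbb Hinv i i0.
apply: NNPP => Ni.
have [d [id [Nd Hd]]] := @max_ex (fun j => ~ P (e j b)) N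
   (fun j hj nj => nj (Hb j hj)) (N - i) i (leqnn _) Ni.
have Nb' : ~ P (e 0 b').
  case: He => H0 _; rewrite H0 => Pb'; apply: Pbb; exact: PM.
have [d' [_ [Nd' Hd']]] := @max_ex (fun j => ~ P (e j b')) N
   (fun j hj nj => nj (Hb' j hj)) (N - 0) 0 (leqnn _) Nb'.
have Hd1 : forall j, (d < j)%N -> P (e j b) by move=> j hj; apply: NNPP; apply: Hd.
have Hd1' : forall j, (d' < j)%N -> P (e j b') by move=> j hj; apply: NNPP; apply: Hd'.
set k := (d + d')%N.
have dk : (d < k.+1)%N by rewrite /k; lia.
have Hk : e k (b * b') = 0 by apply: Hinv; rewrite /k; lia.
case: He => _ [_ [_ [Hmul _]]].
move: Hk; rewrite Hmul (bigD1 (Ordinal dk)) //= => Hk.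
have Hrest : P (\sum_(j < k.+1 | j != Ordinal dk) e j b * e (k - j) b').
  apply: (big_ind P) => //.
  move=> j jd; case: (ltngtP d j) => dj.
  - by rewrite mulrC; apply: PM; apply: Hd1.
  - apply: PM; apply: Hd1'; rewrite /k; case: j jd dj => [jj hj] /= _ dj; lia.
  - by exfalso; move: jd; apply/negP; rewrite negbK; apply/eqP/val_inj.
have Pt : P (e d b * e (k - d) b').
  have -> : e d b * e (k - d) b' =
      (-1) * (\sum_(j < k.+1 | j != Ordinal dk) e j b * e (k - j) b').
    by apply/eqP; rewrite mulN1r -addr_eq0 Hk.
  exact: PM.
rewrite (_ : (k - d = d')%N) in Pt; last by rewrite /k; lia.
by case: (Pp _ _ Pt).
Qed.

End S.

Theorem proposition2p3 (B : comPzRingType) (a : nat -> B -> Prop) (e : nat -> B -> B) :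
  linear_topology a -> complete a -> is_restricted_exp_hom a e ->
  (* (a) *)
  (is_subring (invariants e) /\ complete_in a (invariants e)) /\
  (* (b) *)
  (forall i, (0 < i)%N ->
     (forall b b', e i (b + b') = e i b + e i b') /\
     (forall r b, invariants e r -> e i (r * b) = r * e i b) /\
     (forall n, exists m, forall b, a m b -> a n (e i b))) /\
  (* (c) *)
  ((exists p : nat -> B -> Prop,
      (forall n, is_prime_ideal (p n)) /\
      (forall n, exists m, forall x, a m x -> p n x) /\
      (forall n, exists m, forall x, p m x -> a n x)) ->
   factorially_closed (invariants e) /\
   (forall b, (exists c, b * c = 1) -> invariants e b)).
Proof.
move=> [Hid Hdec] [Hsep Hcpl] He.
have He' := He.
case: He' => H0 [Hadd [H1 [Hmul [Hres [Hcont Hexp]]]]].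
have Hsub : is_subring (invariants e).
  split; first by move=> i _; exact: (@e0 _ _ _ He).
  split; first by move=> i i0; rewrite H1; case: i i0.
  split; first by move=> x y Hx Hy i i0; rewrite (@eB _ _ _ He) Hx // Hy // subr0.
  by move=> x y Hx Hy i i0; rewrite (@emul_inv _ _ _ He) // Hy // mulr0.
split; [split=> //|split].
- split; first by move=> b _; apply: Hsep.
  move=> x Hx Hc; have [b [_ Hb]] := Hcpl x (fun _ => I) Hc.
  exists b; split=> // i i0; apply: Hsep => // n.
  have [m Hm] := Hcont n.
  have := Hm _ (Hb m) i; by rewrite (@eB _ _ _ He) (Hx m i i0) subr0.
- move=> i i0; split=> //; split; first by move=> r b Hr; apply: (@emul_inv _ _ _ He).
  by move=> n; have [m Hm] := Hcont n; exists m => b hb; apply: Hm.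
move=> [p [Hp [Hap Hpa]]].
have FC : factorially_closed (invariants e).
  have key : forall b b', invariants e (b * b') -> b * b' <> 0 -> invariants e b.
    move=> b b' Hbb nz.
    have [k0 Hk0] : exists k0, ~ a k0 (b * b').
      apply: NNPP => nex; apply: nz; apply: Hsep => // n.
      by apply: NNPP => nn; apply: nex; exists n.
    move=> i i0; apply: Hsep => // k.
    have Hmono : forall m n, (m <= n)%N -> forall x, a n x -> a m x.
      move=> m n mn; elim: n mn => [|n IH] mn x Hx.
        by move: mn; rewrite leqn0 => /eqP ->.
      case: (leqP m n) => h; first by apply: IH => //; apply: Hdec.
      by have -> : m = n.+1 by lia.
    pose kk := maxn k k0.
    have [m Hm] := Hpa kk.
    have Pn : ~ p m (b * b').
      by move=> H; apply: Hk0; apply: (Hmono k0 kk); [lia|apply: Hm].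
    have [m' Hm'] := Hap m.
    have [N1 HN1] := Hres b m'; have [N2 HN2] := Hres b' m'.
    have := @prime_key B a e He (p m) b b' (maxn N1 N2) (Hp m)
      (fun j hj => Hm' _ (HN1 j ltac:(lia)))
      (fun j hj => Hm' _ (HN2 j ltac:(lia))) Pn Hbb i i0.
    move=> /Hm; apply: Hmono; lia.
  move=> b b' Hbb nz; split; first exact: key Hbb nz.
  by apply: (key b' b); rewrite mulrC.
split=> // b [c Hc].
case: (eqVneq (1 : B) 0) => h10.
  have -> : b = 0 by rewrite -(mulr1 b) h10 mulr0.
  by move=> i _; exact: (@e0 _ _ _ He).
have Hinv1 : invariants e (b * c) by rewrite Hc; case: Hsub => _ [].
by case: (FC b c Hinv1); rewrite // Hc; apply/eqP.
Qed.
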